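(* Let $\mathbb F$ be a field and $\gamma$ a permutation of $\mathbb F$ fixing both $0$ and $1$. Suppose that $\gamma$ normalizes both the groups $\Gamma(\mathbb F^\times)$ and $s\Gamma(\mathbb F^\times)s$, where $s$ is the permutation $x\mapsto -x+1$. Then $\gamma\in\mathrm{Aut}(\mathbb F)$.
   Context: $\Gamma(\mathbb F^\times)$ denotes the group of permutations of $\mathbb F$ of the form $x\mapsto ax$ with $a\in\mathbb F^\times$. $\mathrm{Aut}(\mathbb F)$ is the group of field automorphisms. *)

(* Defs.v *)
From mathcomp Require Import all_boot all_algebra.
Set Implicit Arguments. Unset Strict Implicit. Unset Printing Implicit Defensive.
Import GRing.Theory.
Local Open Scope ring_scope.

(* Permutations of F are represented as bijective functions F -> F;
   groups of permutations as predicates on functions F -> F,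
   equality of permutations being pointwise equality. *)

Definition Gamma_mul (F : fieldType) : (F -> F) -> Prop :=
  fun f => exists2 a : F, a != 0 & f =1 (fun x => a * x).

Definition sflip (F : fieldType) (x : F) : F := - x + 1.

Definition sGamma_s (F : fieldType) : (F -> F) -> Prop :=
  fun f => exists2 g, Gamma_mul g & f =1 (@sflip F \o g \o @sflip F).

(* gamma normalizes G, i.e. gamma G gamma^{-1} = G (for bijective gamma):
   every conjugate gamma g gamma^{-1} (g in G) lies in G, and every h in G
   is of that form. Written without the inverse as gamma \o g = h \o gamma. *)
Definition normalizes (F : fieldType) (gamma : F -> F)
    (G : (F -> F) -> Prop) : Prop :=
  (forall g, G g -> exists2 h, G h & gamma \o g =1 h \o gamma) /\
  (forall h, G h -> exists2 g, G g & gamma \o g =1 h \o gamma).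

Definition field_aut (F : fieldType) (gamma : F -> F) : Prop :=
  [/\ bijective gamma,
      (forall x y, gamma (x + y) = gamma x + gamma y),
      (forall x y, gamma (x * y) = gamma x * gamma y) &
      gamma 1 = 1].

(* Main.v *)
Require Import Defs.
From mathcomp Require Import all_boot all_algebra.
From mathcomp Require Import ring.
Import GRing.Theory.
Local Open Scope ring_scope.

Section S.
Variable (F : fieldType) (gamma : F -> F).
Hypothesis (bij : bijective gamma) (g0 : gamma 0 = 0) (g1 : gamma 1 = 1).

Lemma inj_g : injective gamma. Proof. exact: bij_inj. Qed.

Lemma gM_of (N : normalizes gamma (@Gamma_mul F)) a x : gamma (a * x) = gamma a * gamma x.
Proof.
have [->|a0] := eqVneq a 0; first by rewrite mul0r g0 mul0r.
have [h [b _ hb] e] := N.1 (fun x => a * x) (ex_intro2 _ _ a a0 (fun _ => erefl)).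
have e1 := e 1; rewrite /= mulr1 hb g1 mulr1 in e1.
have ex := e x; rewrite /= hb in ex; by rewrite ex e1.
Qed.

Lemma dM_of (N : normalizes gamma (@sGamma_s F)) a y :
  1 - gamma (1 - a * y) = (1 - gamma (1 - a)) * (1 - gamma (1 - y)).
Proof.
have [->|a0] := eqVneq a 0.
  by rewrite !mul0r !subr0 g1 subrr mul0r.
have Hg : sGamma_s (@sflip F \o (fun x => a * x) \o @sflip F).
  by exists (fun x => a * x) => //; exists a.
have [h [h' [b _ hb] hh] e] := N.1 _ Hg.
have ex x : gamma (- (a * (- x + 1)) + 1) = - (b * (- gamma x + 1)) + 1.
  by have := e x; rewrite /= /sflip => ->; rewrite hh /= /sflip hb.
have e1 := ex (1 - y); have e0 := ex 0.
rewrite g0 in e0.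
have hb' : b = 1 - gamma (1 - a).
  have -> : 1 - a = -(a*(-0+1))+1 by ring.
  rewrite e0; ring.
have -> : 1 - a * y = - (a * (- (1 - y) + 1)) + 1 by ring.
rewrite e1 hb'; ring.
Qed.
End S.

Theorem corollary2p2 (F : fieldType) (gamma : F -> F) :
  bijective gamma -> gamma 0 = 0 -> gamma 1 = 1 ->
  normalizes gamma (@Gamma_mul F) -> normalizes gamma (@sGamma_s F) ->
  field_aut gamma.
Proof.
move=> bij g0 g1 N1 N2.
have inj := bij_inj bij.
have gM := @gM_of F gamma g0 g1 N1.
pose d y := 1 - gamma (1 - y).
have dM a y : d (a * y) = d a * d y by exact: (@dM_of F gamma g0 g1 N2).
have d1 : d 1 = 1 by rewrite /d subrr g0 subr0.
have gm1 : gamma (-1) = -1.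
  have : gamma (-1) * gamma (-1) = 1 by rewrite -gM mulrNN mulr1 g1.
  move=> h.
  have : (gamma (-1) - 1) * (gamma (-1) + 1) = 0.
    by rewrite mulrDr !mulrBl h mul1r mulr1; ring.
  move/eqP; rewrite mulf_eq0 => /orP[|/eqP]; last by move/eqP; rewrite addr_eq0 => /eqP.
  by rewrite subr_eq0 -g1 => /eqP /inj ->; rewrite g1.
have g1m x : gamma (1 - x) = 1 - gamma x.
  have [->|x0] := eqVneq x 0; first by rewrite subr0 g0 subr0.
  have [->|x1] := eqVneq x 1; first by rewrite subrr g0 g1 subrr.
  have dx1 : d x != 1.
    rewrite /d; apply/eqP => /eqP; rewrite subr_eq addrC -subr_eq subrr eq_sym -g0.
    by move/eqP/inj/eqP; rewrite subr_eq0 eq_sym (negbTE x1).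
  have dinv : d (x^-1) * d x = 1 by rewrite -dM mulVf.
  have e : 1 - x = (-1) * x * (1 - x^-1) by field.
  have : d x * (1 - d x) = d x * (- gamma x * (1 - d (x^-1))).
    have hx : 1 - d x = gamma (1 - x) by rewrite /d; ring.
    by rewrite hx e !gM gm1 mulN1r /d; ring.
  move=> h.
  have : (1 - d x) * (d x - gamma x) = 0.
    move: h dinv; generalize (d x) (d x^-1) (gamma x) => a b c h hd.
    have -> : (1-a)*(a-c) = a*(1-a) - c + c*a by ring.
    rewrite h.
    have -> : a * (-c*(1-b)) - c + c*a = c*(b*a) - c by ring.
    by rewrite hd; ring.
  move/eqP; rewrite mulf_eq0 subr_eq0 eq_sym (negbTE dx1) /= subr_eq0 => /eqP <-.
  by rewrite /d; ring.
have gN x : gamma (- x) = - gamma x by rewrite -mulN1r gM gm1 mulN1r.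
have gD1 x : gamma (1 + x) = 1 + gamma x.
  by rewrite -(opprK x) g1m gN !opprK.
split => //.
move=> x y; have [->|x0] := eqVneq x 0; first by rewrite g0 !add0r.
have -> : x + y = x * (1 + y / x) by field.
by rewrite gM gD1 mulrDr mulr1 -gM; congr (_ + gamma _); field.
Qed.
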